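(* Let $\mathcal{A}=\langle Q,A,E,I,T\rangle$ be a finite automaton over the free monoid $A^*$ and let $\omega$ and $\omega'$ be two total orders on $Q$. Then $$\mathbf{N}\wedge\mathbf{S}\wedge\mathbf{P}\ \vdash\ \mathsf{SR}_\omega(\mathcal{A})\equiv\mathsf{SR}_{\omega'}(\mathcal{A}),$$ that is, the two expressions produced by the system-solution method for the orders $\omega$ and $\omega'$ can be proved equal using the natural identities $\mathbf{N}$ together with the aperiodic identities $\mathbf{S}$ and $\mathbf{P}$.
   Context: Rational expressions over $A^*$ are the well-formed formulas built from the constants $\mathsf{0}$ and $\mathsf{1}$ and the letters of $A$ by the binary operators $+$ and $\cdot$ and the unary operator ${}^*$. The expression $\mathsf{E}$ denotes the language $|\mathsf{E}|\subseteq A^*$ in the usual way. All expressions are taken reduced modulo the trivial identities $\mathsf{E}+\mathsf{0}\equiv\mathsf{E}$, $\mathsf{0}+\mathsf{E}\equiv\mathsf{E}$, $\mathsf{E}\cdot\mathsf{0}\equiv\mathsf{0}$, $\mathsf{0}\cdot\mathsf{E}\equiv\mathsf{0}$, $\mathsf{E}\cdot\mathsf{1}\equiv\mathsf{E}$, $\mathsf{1}\cdot\mathsf{E}\equiv\mathsf{E}$, $\mathsf{0}^*\equiv\mathsf{1}$. All computations on expressions below are performed modulo these identities. The natural identities $\mathbf{N}$ are: - associativity: $(\mathsf{E}+\mathsf{F})+\mathsf{G}\equiv\mathsf{E}+(\mathsf{F}+\mathsf{G})$ and $(\mathsf{E}\cdot\mathsf{F})\cdot\mathsf{G}\equiv\mathsf{E}\cdot(\mathsf{F}\cdot\mathsf{G})$;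 - distributivity: $\mathsf{E}\cdot(\mathsf{F}+\mathsf{G})\equiv\mathsf{E}\cdot\mathsf{F}+\mathsf{E}\cdot\mathsf{G}$ and $(\mathsf{E}+\mathsf{F})\cdot\mathsf{G}\equiv\mathsf{E}\cdot\mathsf{G}+\mathsf{F}\cdot\mathsf{G}$; - commutativity: $\mathsf{E}+\mathsf{F}\equiv\mathsf{F}+\mathsf{E}$. The aperiodic identities are: - $\mathbf{S}$: $(\mathsf{E}+\mathsf{F})^*\equiv\mathsf{E}^*\cdot(\mathsf{F}\cdot\mathsf{E}^* )^*$ and $(\mathsf{E}+\mathsf{F})^*\equiv(\mathsf{E}^*\cdot\mathsf{F})^*\cdot\mathsf{E}^*$; - $\mathbf{P}$: $(\mathsf{E}\cdot\mathsf{F})^*\equiv\mathsf{1}+\mathsf{E}\cdot(\mathsf{F}\cdot\mathsf{E})^*\cdot\mathsf{F}$. For a set $\mathcal{I}$ of identities, $\mathcal{I}\vdash\mathsf{X}\equiv\mathsf{Y}$ means that $\mathsf{X}$ and $\mathsf{Y}$ are related by the smallest congruence on expressions (for $+$, $\cdot$ and ${}^*$) that contains all instances of the identities in $\mathcal{I}$, working modulo the trivial identities. System-solution method. For $p,q\in Q$, let $\mathsf{E}_{p,q}$ be the sum, written in some fixed order and bracketing, of the letters labelling the transitions from $p$ to $q$; it is $\mathsf{0}$ if there is no such transition. The method maintains a set $Q'\subseteq Q$ and expressions $\mathsf{G}_p$, $\mathsf{H}$, $\mathsf{F}_{p,q}$, $\mathsf{K}_p$ for $p,q\in Q'$. The initial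 values are: - $Q'=Q$; - $\mathsf{G}_p=\mathsf{1}$ if $p\in I$ and $\mathsf{0}$ otherwise; - $\mathsf{H}=\mathsf{0}$; - $\mathsf{F}_{p,q}=\mathsf{E}_{p,q}$; - $\mathsf{K}_p=\mathsf{1}$ if $p\in T$ and $\mathsf{0}$ otherwise. The states of $Q$ are then eliminated one by one in increasing order for $\omega$. Eliminating $q\in Q'$ replaces the expressions, for all $r,p\in Q'\setminus\{q\}$, by: - $\mathsf{G}_r\leftarrow\mathsf{G}_r+\mathsf{G}_q\cdot\mathsf{F}_{q,q}^*\cdot\mathsf{F}_{q,r}$; - $\mathsf{H}\leftarrow\mathsf{H}+\mathsf{G}_q\cdot\mathsf{F}_{q,q}^*\cdot\mathsf{K}_q$; - $\mathsf{F}_{r,p}\leftarrow\mathsf{F}_{r,p}+\mathsf{F}_{r,q}\cdot\mathsf{F}_{q,q}^*\cdot\mathsf{F}_{q,p}$; - $\mathsf{K}_r\leftarrow\mathsf{K}_r+\mathsf{F}_{r,q}\cdot\mathsf{F}_{q,q}^*\cdot\mathsf{K}_q$; and then sets $Q'\leftarrow Q'\setminus\{q\}$. When $Q'$ is empty, the final value of $\mathsf{H}$ is the expression $\mathsf{SR}_\omega(\mathcal{A})$. It denotes the language accepted by $\mathcal{A}$. *)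

(* Defs.v *)
From mathcomp Require Import all_boot.
Set Implicit Arguments. Unset Strict Implicit. Unset Printing Implicit Defensive.

Inductive rexp (A : Type) : Type :=
| Zero : rexp A
| One : rexp A
| Atom : A -> rexp A
| Plus : rexp A -> rexp A -> rexp A
| Conc : rexp A -> rexp A -> rexp A
| Star : rexp A -> rexp A.
Arguments Zero {A}. Arguments One {A}.

(* Smart constructors: computations are performed modulo the trivial
   identities E+0=E, 0+E=E, E.0=0, 0.E=0, E.1=E, 1.E=E, 0*=1. *)
Definition splus A (E F : rexp A) : rexp A :=
  match E, F with
  | Zero, _ => F
  | _, Zero => E
  | _, _ => Plus E F
  end.

Definition sconc A (E F : rexp A) : rexp A :=
  match E, F with
  | Zero, _ => Zero
  | _, Zero => Zero
  | One, _ => F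
  | _, One => E
  | _, _ => Conc E F
  end.

Definition sstar A (E : rexp A) : rexp A :=
  match E with
  | Zero => One
  | _ => Star E
  end.

Definition identities A := rexp A -> rexp A -> Prop.

Inductive Triv_ax A : identities A :=
| tr_plus0r E : Triv_ax (Plus E Zero) E
| tr_plus0l E : Triv_ax (Plus Zero E) E
| tr_conc0r E : Triv_ax (Conc E Zero) Zero
| tr_conc0l E : Triv_ax (Conc Zero E) Zero
| tr_conc1r E : Triv_ax (Conc E One) E
| tr_conc1l E : Triv_ax (Conc One E) E
| tr_star0 : Triv_ax (Star Zero) One.

Inductive N_ax A : identities A :=
| n_plusA E F G : N_ax (Plus (Plus E F) G) (Plus E (Plus F G))
| n_concA E F G : N_ax (Conc (Conc E F) G) (Conc E (Conc F G))
| n_distl E F G : N_ax (Conc E (Plus F G)) (Plus (Conc E F) (Conc E G))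
| n_distr E F G : N_ax (Conc (Plus E F) G) (Plus (Conc E G) (Conc F G))
| n_plusC E F : N_ax (Plus E F) (Plus F E).

Inductive S_ax A : identities A :=
| s_sumstar1 E F : S_ax (Star (Plus E F)) (Conc (Star E) (Star (Conc F (Star E))))
| s_sumstar2 E F : S_ax (Star (Plus E F)) (Conc (Star (Conc (Star E) F)) (Star E)).

Inductive P_ax A : identities A :=
| p_prodstar E F : P_ax (Star (Conc E F)) (Plus One (Conc (Conc E (Star (Conc F E))) F)).

Definition NSP A : identities A := fun X Y => N_ax X Y \/ S_ax X Y \/ P_ax X Y.

Inductive derivable A (I : identities A) : rexp A -> rexp A -> Prop :=
| d_ax X Y : I X Y -> derivable I X Y
| d_triv X Y : Triv_ax X Y -> derivable I X Y
| d_refl X : derivable I X X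
| d_sym X Y : derivable I X Y -> derivable I Y X
| d_trans X Y Z : derivable I X Y -> derivable I Y Z -> derivable I X Z
| d_plus X X' Y Y' : derivable I X X' -> derivable I Y Y' ->
    derivable I (Plus X Y) (Plus X' Y')
| d_conc X X' Y Y' : derivable I X X' -> derivable I Y Y' ->
    derivable I (Conc X Y) (Conc X' Y')
| d_star X X' : derivable I X X' -> derivable I (Star X) (Star X').

Record automaton (Q A : finType) := Automaton {
  trans : {set Q * A * Q};
  initial : {set Q};
  final : {set Q} }.

Section SR.
Variables (Q A : finType) (aut : automaton Q A).

Definition Epq (p q : Q) : rexp A :=
  foldr (fun a e => splus (Atom a) e) Zero
        [seq a <- enum A | (p, a, q) \in trans aut].

Record sstate := SState {
  stG : Q -> rexp A; stH : rexp A; stF : Q -> Q -> rexp A; stK : Q -> rexp A }.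

Definition init_state : sstate :=
  SState (fun p => if p \in initial aut then One else Zero) Zero Epq
         (fun p => if p \in final aut then One else Zero).

(* Eliminate q; [rest] is Q' \ {q}. *)
Definition elim_step (rest : seq Q) (q : Q) (st : sstate) : sstate :=
  let Fqq := sstar (stF st q q) in
  SState
    (fun r => if r \in rest
              then splus (stG st r) (sconc (sconc (stG st q) Fqq) (stF st q r))
              else stG st r)
    (splus (stH st) (sconc (sconc (stG st q) Fqq) (stK st q)))
    (fun r p => if (r \in rest) && (p \in rest)
                then splus (stF st r p) (sconc (sconc (stF st r q) Fqq) (stF st q p))
                else stF st r p)
    (fun r => if r \in rest
              then splus (stK st r) (sconc (sconc (stF st r q) Fqq) (stK st q))
              else stK st r).

Fixpoint run (s : seq Q) (st : sstate) : sstate :=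
  match s with
  | [::] => st
  | q :: s' => run s' (elim_step s' q st)
  end.

(* A total order omega on Q is represented by the list of the elements of Q
   in increasing order (a permutation of enum Q). *)
Definition SR (omega : seq Q) : rexp A := stH (run omega init_state).

End SR.

(* Main.v *)
Require Import Defs.
From mathcomp Require Import all_boot.
From Stdlib Require Import Setoid Morphisms.
Set Implicit Arguments. Unset Strict Implicit.

Add Parametric Relation (A : Type) : (rexp A) (derivable (@NSP A))
  reflexivity proved by (@d_refl A (@NSP A))
  symmetry proved by (@d_sym A (@NSP A))
  transitivity proved by (@d_trans A (@NSP A)) as deq_rel.
Add Parametric Morphism (A : Type) : (@Plus A) with signature (derivable (@NSP A)) ==> (derivable (@NSP A)) ==> (derivable (@NSP A)) as plus_mor.
Proof. intros; apply d_plus; assumption. Qed.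
Add Parametric Morphism (A : Type) : (@Conc A) with signature (derivable (@NSP A)) ==> (derivable (@NSP A)) ==> (derivable (@NSP A)) as conc_mor.
Proof. intros; apply d_conc; assumption. Qed.
Add Parametric Morphism (A : Type) : (@Star A) with signature (derivable (@NSP A)) ==> (derivable (@NSP A)) as star_mor.
Proof. intros; apply d_star; assumption. Qed.

Section Alg.
Variable A : Type.
Notation "X ~~ Y" := (derivable (@NSP A) X Y) (at level 70).
Implicit Types a b c d e f g x y z w : rexp A.

Lemma plusC a b : Plus a b ~~ Plus b a.
Proof. apply d_ax; left; constructor. Qed.
Lemma plusA a b c : Plus (Plus a b) c ~~ Plus a (Plus b c).
Proof. apply d_ax; left; constructor. Qed.
Lemma concA a b c : Conc (Conc a b) c ~~ Conc a (Conc b c).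
Proof. apply d_ax; left; constructor. Qed.
Lemma concDr a b c : Conc a (Plus b c) ~~ Plus (Conc a b) (Conc a c).
Proof. apply d_ax; left; constructor. Qed.
Lemma concDl a b c : Conc (Plus a b) c ~~ Plus (Conc a c) (Conc b c).
Proof. apply d_ax; left; constructor. Qed.
Lemma sumstar1 a b : Star (Plus a b) ~~ Conc (Star a) (Star (Conc b (Star a))).
Proof. apply d_ax; right; left; constructor. Qed.
Lemma sumstar2 a b : Star (Plus a b) ~~ Conc (Star (Conc (Star a) b)) (Star a).
Proof. apply d_ax; right; left; constructor. Qed.
Lemma prodstar a b : Star (Conc a b) ~~ Plus One (Conc (Conc a (Star (Conc b a))) b).
Proof. apply d_ax; right; right; constructor. Qed.
Lemma plus0l a : Plus Zero a ~~ a. Proof. apply d_triv; constructor. Qed.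
Lemma plus0r a : Plus a Zero ~~ a. Proof. apply d_triv; constructor. Qed.
Lemma conc0l a : Conc Zero a ~~ Zero. Proof. apply d_triv; constructor. Qed.
Lemma conc0r a : Conc a Zero ~~ Zero. Proof. apply d_triv; constructor. Qed.
Lemma conc1l a : Conc One a ~~ a. Proof. apply d_triv; constructor. Qed.
Lemma conc1r a : Conc a One ~~ a. Proof. apply d_triv; constructor. Qed.
Lemma star0 : Star (@Zero A) ~~ One. Proof. apply d_triv; constructor. Qed.

Lemma splusE a b : splus a b ~~ Plus a b.
Proof. case: a => [||?|??|??|?]; case: b => [||?|??|??|?] /=; rewrite ?plus0l ?plus0r; reflexivity. Qed.
Lemma sconcE a b : sconc a b ~~ Conc a b.
Proof. case: a => [||?|??|??|?]; case: b => [||?|??|??|?] /=; rewrite ?conc0l ?conc0r ?conc1l ?conc1r; reflexivity. Qed.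
Lemma sstarE a : sstar a ~~ Star a.
Proof. case: a => [||?|??|??|?] /=; rewrite ?star0; reflexivity. Qed.

End Alg.
Add Parametric Morphism (A : Type) : (@splus A) with signature (derivable (@NSP A)) ==> (derivable (@NSP A)) ==> (derivable (@NSP A)) as splus_mor.
Proof. intros. rewrite !splusE. by apply d_plus. Qed.
Add Parametric Morphism (A : Type) : (@sconc A) with signature (derivable (@NSP A)) ==> (derivable (@NSP A)) ==> (derivable (@NSP A)) as sconc_mor.
Proof. intros. rewrite !sconcE. by apply d_conc. Qed.
Add Parametric Morphism (A : Type) : (@sstar A) with signature (derivable (@NSP A)) ==> (derivable (@NSP A)) as sstar_mor.
Proof. intros. rewrite !sstarE. by apply d_star. Qed.
Section Alg2.
Variable A : Type.
Notation "X ~~ Y" := (derivable (@NSP A) X Y) (at level 70).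
Implicit Types a b c d e f g x y z w : rexp A.
Lemma fixl a : Star a ~~ Plus One (Conc a (Star a)).
Proof.
have := prodstar a One. rewrite conc1r conc1l conc1r. by [].
Qed.

Lemma slide a b : Conc (Star (Conc a b)) a ~~ Conc a (Star (Conc b a)).
Proof.
rewrite (prodstar b a) concDr conc1r {1}(fixl (Conc a b)) concDl conc1l.
rewrite !concA. reflexivity.
Qed.

Lemma I1 x y z w :
  Star (Plus x (Conc (Conc y (Star z)) w)) ~~
  Plus (Star x) (Conc (Conc (Conc (Conc (Star x) y) (Star (Plus z (Conc (Conc w (Star x)) y)))) w) (Star x)).
Proof.
rewrite sumstar1 (sumstar2 z) !concA prodstar concDr conc1r !concA.
reflexivity.
Qed.

Lemma I2 x y z w :
  Conc (Conc (Star (Plus x (Conc (Conc y (Star z)) w))) y) (Star z) ~~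
  Conc (Conc (Star x) y) (Star (Plus z (Conc (Conc w (Star x)) y))).
Proof.
rewrite sumstar2 (sumstar1 z) !concA.
have := slide (Conc (Star x) (Conc y (Star z))) w. rewrite !concA => ->.
reflexivity.
Qed.
End Alg2.
Section Exp.
Variable A : Type.
Notation "X ~~ Y" := (derivable (@NSP A) X Y) (at level 70).
Implicit Types a b c d e f g x y z w : rexp A.
Lemma ac6 e t p1 p2 q1 q2 :
  Plus (Plus e t) (Plus (Plus p1 p2) (Plus q1 q2)) ~~
  Plus e (Plus (Plus p1 p2) (Plus q1 (Plus t q2))).
Proof.
rewrite plusA; apply: plus_mor_Proper; first reflexivity.
rewrite plusC plusA; apply: plus_mor_Proper; first reflexivity.
rewrite plusA; apply: plus_mor_Proper; first reflexivity.
rewrite plusC; reflexivity.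
Qed.

Lemma expand e ap aq bp bq x y z w :
  Plus (Plus e (Conc (Conc aq (Star z)) bq))
   (Conc (Conc (Plus ap (Conc (Conc aq (Star z)) w)) (Star (Plus x (Conc (Conc y (Star z)) w))))
         (Plus bp (Conc (Conc y (Star z)) bq)))
  ~~
  Plus e (Plus (Plus (Conc (Conc ap (Star (Plus x (Conc (Conc y (Star z)) w)))) bp)
                     (Conc (Conc ap (Conc (Conc (Star (Plus x (Conc (Conc y (Star z)) w))) y) (Star z))) bq))
               (Plus (Conc (Conc aq (Conc (Conc (Star z) w) (Star (Plus x (Conc (Conc y (Star z)) w))))) bp)
                     (Conc (Conc aq (Plus (Star z) (Conc (Conc (Conc (Conc (Star z) w) (Star (Plus x (Conc (Conc y (Star z)) w)))) y) (Star z)))) bq))).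
Proof.
rewrite !concDl !concDr !concDl !concA. exact: ac6.
Qed.

Lemma swap2 e ap aq bp bq x y z w :
  splus (splus e (sconc (sconc aq (sstar z)) bq)) (sconc (sconc (splus ap (sconc (sconc aq (sstar z)) w)) (sstar (splus x (sconc (sconc y (sstar z)) w)))) (splus bp (sconc (sconc y (sstar z)) bq)))
  ~~ splus (splus e (sconc (sconc ap (sstar x)) bp)) (sconc (sconc (splus aq (sconc (sconc ap (sstar x)) y)) (sstar (splus z (sconc (sconc w (sstar x)) y)))) (splus bq (sconc (sconc w (sstar x)) bp))).
Proof.
rewrite !splusE !sconcE !sstarE ?splusE ?sconcE ?sstarE.
rewrite expand (expand e aq ap bq bp z w x y).
apply: plus_mor_Proper; first reflexivity.
rewrite (plusC (Plus (Conc (Conc aq _) bq) _)).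
apply: plus_mor_Proper; rewrite plusC; apply: plus_mor_Proper;
  (apply: conc_mor_Proper; last reflexivity); (apply: conc_mor_Proper; first reflexivity).
- exact: I2.
- exact: I1.
- symmetry; exact: I1.
- symmetry; exact: I2.
Qed.
End Exp.
Section Aut.
Variables (Q A : finType).
Notation "X ~~ Y" := (derivable (@NSP A) X Y) (at level 70).

Definition seqv (S : seq Q) (st1 st2 : sstate Q A) :=
  stH st1 ~~ stH st2 /\ (forall r, r \in S -> stG st1 r ~~ stG st2 r /\ stK st1 r ~~ stK st2 r /\ forall p, p \in S -> stF st1 r p ~~ stF st2 r p).

Ltac cong := repeat (first [apply: splus_mor_Proper | apply: sconc_mor_Proper | apply: sstar_mor_Proper | assumption | reflexivity]).

Lemma seqv_refl S st : seqv S st st.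
Proof. split; first reflexivity. move=> r _; split; first reflexivity; split; first reflexivity. move=> *; reflexivity. Qed.

Lemma seqv_sym S st1 st2 : seqv S st1 st2 -> seqv S st2 st1.
Proof.
case=> hH hS; split; first by symmetry.
move=> r Hr; case: (hS r Hr) => [a [b c]]; split; first by symmetry.
split; first by symmetry. move=> p Hp; symmetry; exact: c.
Qed.

Lemma step_cong (s1 s2 : seq Q) q st1 st2 : s1 =i s2 -> seqv (q::s1) st1 st2 ->
  seqv s1 (elim_step s1 q st1) (elim_step s2 q st2).
Proof.
move=> E [hH hS].
have hq := hS q (mem_head _ _). case: hq => [hGq [hKq hFq]].
have hFqq := hFq q (mem_head _ _).
split.
  rewrite /elim_step /=. cong.
move=> r Hr. have Hr2 : r \in s2 by rewrite -E.
have Hr' : r \in q :: s1 by rewrite inE Hr orbT.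
case: (hS r Hr') => [hGr [hKr hFr]].
rewrite /elim_step /= Hr Hr2. split; first by cong; apply: hFq.
split; first by cong; apply: hFr; apply: mem_head.
move=> p Hp. have Hp2 : p \in s2 by rewrite -E.
have Hp' : p \in q :: s1 by rewrite inE Hp orbT.
rewrite Hp Hp2 /=. cong; [apply: hFr | apply: hFr; apply: mem_head | apply: hFq] => //.
Qed.

Lemma run_cong s st1 st2 : seqv s st1 st2 -> stH (run s st1) ~~ stH (run s st2).
Proof.
elim: s st1 st2 => [|q s IH] st1 st2 h /=; first by case: h.
apply: IH; exact: step_cong.
Qed.

Lemma swap_step s p q st :
  seqv s (elim_step s p (elim_step (p::s) q st)) (elim_step s q (elim_step (q::s) p st)).
Proof.
split.
  rewrite /elim_step /= !inE !eqxx /=. exact: swap2.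
move=> r Hr. rewrite /elim_step /= !inE Hr !orbT !eqxx /=.
split; first exact: swap2.
split; first exact: swap2.
move=> r' Hr'. rewrite !inE Hr' !orbT /=. exact: swap2.
Qed.

Lemma move_front (s1 : seq Q) (x : Q) s2 (st : sstate Q A) :
  stH (run (s1 ++ x :: s2) st) ~~ stH (run (x :: s1 ++ s2) st).
Proof.
elim: s1 st => [|y s1 IH] st /=; first reflexivity.
rewrite IH /=.
apply: d_trans; last first.
  apply: run_cong; exact: swap_step.
apply: run_cong; apply: step_cong => //.
apply: seqv_sym.
apply: step_cong; last exact: seqv_refl.
by move=> z; rewrite !(mem_cat, inE) orbCA.
Qed.

Lemma perm_run (s s' : seq Q) (st : sstate Q A) : perm_eq s s' -> stH (run s st) ~~ stH (run s' st).
Proof.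
elim: s s' st => [|x t IH] s' st hp.
  by case: s' hp => [|y s'] hp; [reflexivity | have := perm_size hp].
have hx : x \in s' by rewrite -(perm_mem hp) mem_head.
case/splitPr: hx hp => s1 s2 hp.
have ht : perm_eq t (s1 ++ s2).
  by move: hp; rewrite perm_sym -(cat1s x s2) perm_catCA /= perm_cons perm_sym.
rewrite move_front /=.
apply: d_trans; first exact: (IH _ _ ht).
apply: run_cong; apply: seqv_sym; apply: step_cong; last exact: seqv_refl.
by move=> z; rewrite (perm_mem ht).
Qed.
End Aut.

Theorem corollary3p7 (Q A : finType) (aut : automaton Q A) (omega omega' : seq Q) :
  perm_eq omega (enum Q) -> perm_eq omega' (enum Q) ->
  derivable (@NSP A) (SR aut omega) (SR aut omega').
Proof.
move=> h1 h2. apply: perm_run.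
by apply: perm_trans h1 _; rewrite perm_sym.
Qed.
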